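(* Let $\Lambda$ be a $k$-graph with no sinks such that $\Lambda^0$ is finite. Then for every $v\in\Lambda^0$ there exist $w\in\Lambda^0$ and $\alpha\in w\Lambda w$ such that $d(\alpha)>0$ and $w\Lambda v\ne\emptyset$.
   Context: A $k$-graph is a countable category $\Lambda$ with a functor $d:\Lambda\to\mathbb{N}^k$ with unique factorisation (for each $\lambda$ and $d(\lambda)=m+n$ there are unique $\mu,\nu$ with $d(\mu)=m$, $d(\nu)=n$, $\lambda=\mu\nu$); $\Lambda^n=d^{-1}(n)$, $\Lambda^0$ = vertices, $uXv=\{\lambda\in X:r(\lambda)=u,s(\lambda)=v\}$. No sinks: $\Lambda^nv\ne\emptyset$ for all $v\in\Lambda^0$ and nonzero $n\in\mathbb{N}^k$. For $m\in\mathbb{N}^k$, $m>0$ means $m_i>0$ for all $i$. *)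

(* Defs.v *)
From mathcomp Require Import all_boot.
Set Implicit Arguments. Unset Strict Implicit. Unset Printing Implicit Defensive.

(* Degrees live in N^k, represented as functions 'I_k -> nat,
   compared pointwise (to avoid functional extensionality). *)

(* Composition [comp mu nu] (= mu nu, "first nu then mu") is a total function
   whose values are only constrained when s mu = r nu. *)
Record kgraph (k : nat) := KGraph {
  vert : countType;
  kpath : countType;
  rng : kpath -> vert;
  src : kpath -> vert;
  idp : vert -> kpath;
  comp : kpath -> kpath -> kpath;
  deg : kpath -> 'I_k -> nat;
  rng_id : forall v, rng (idp v) = v;
  src_id : forall v, src (idp v) = v;
  rng_comp : forall mu nu, src mu = rng nu -> rng (comp mu nu) = rng mu;
  src_comp : forall mu nu, src mu = rng nu -> src (comp mu nu) = src nu;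
  comp_idl : forall mu, comp (idp (rng mu)) mu = mu;
  comp_idr : forall mu, comp mu (idp (src mu)) = mu;
  compA : forall la mu nu, src la = rng mu -> src mu = rng nu ->
    comp la (comp mu nu) = comp (comp la mu) nu;
  deg_id : forall v i, deg (idp v) i = 0;
  deg_comp : forall mu nu, src mu = rng nu ->
    forall i, deg (comp mu nu) i = deg mu i + deg nu i;
  unique_fact : forall la (m n : 'I_k -> nat),
    (forall i, deg la i = m i + n i) ->
    exists mu nu, [/\ src mu = rng nu, (forall i, deg mu i = m i),
                      (forall i, deg nu i = n i) & la = comp mu nu] /\
      forall mu' nu', src mu' = rng nu' -> (forall i, deg mu' i = m i) ->
        (forall i, deg nu' i = n i) -> la = comp mu' nu' ->
        mu' = mu /\ nu' = nu
}.

Definition no_sinks k (G : kgraph k) : Prop :=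
  forall (v : vert G) (n : 'I_k -> nat), (exists i, n i <> 0) ->
    exists la : kpath G, src la = v /\ forall i, deg la i = n i.

Definition finite_vertices k (G : kgraph k) : Prop :=
  exists s : seq (vert G), forall v, v \in s.

(* Main.v *)
Require Import Defs.
From Stdlib Require Import ClassicalEpsilon.
From mathcomp Require Import all_boot.
Set Implicit Arguments. Unset Strict Implicit.

Section S.
Variables (k : nat) (G : kgraph k).
Variable f : vert G -> kpath G.
Hypothesis fsrc : forall u, src (f u) = u.
Hypothesis fdeg : forall u i, deg (f u) i = 1.

Definition nxt u := rng (f u).

Fixpoint seg (a : vert G) (m : nat) : kpath G :=
  match m with 0 => @idp _ G a | m'.+1 => @Defs.comp _ G (f (rng (seg a m'))) (seg a m') end.

Lemma seg_prop a m : [/\ src (seg a m) = a, rng (seg a m) = iter m nxt a &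
   forall i, deg (seg a m) i = m].
Proof.
elim: m => [|m [H1 H2 H3]] /=.
  by split; [apply: src_id | apply: rng_id | move=> i; apply: deg_id].
have e : src (f (rng (seg a m))) = rng (seg a m) by apply: fsrc.
split.
- by rewrite src_comp.
- by rewrite rng_comp // /nxt H2.
- by move=> i; rewrite deg_comp // fdeg H3.
Qed.
End S.

Theorem lemma2p9 (k : nat) (G : kgraph k) :
  no_sinks G -> finite_vertices G ->
  forall v : vert G,
    exists (w : vert G) (alpha : kpath G),
      [/\ rng alpha = w, src alpha = w, (forall i, 0 < deg alpha i) &
          exists la : kpath G, rng la = w /\ src la = v].
Proof.
move=> ns Hf v; case: Hf => s Hs; move: ns s Hs v.
case: k G => [|k] G ns s Hs v.
  exists v, (@idp _ G v); split; [apply: rng_id | apply: src_id | by case |].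
  by exists (@idp _ G v); split; [apply: rng_id | apply: src_id].
have ex : forall u : vert G, exists la : kpath G, src la = u /\ forall i, deg la i = 1.
  move=> u; apply: ns; by exists ord0.
pose f u := proj1_sig (constructive_indefinite_description _ (ex u)).
have fP : forall u, src (f u) = u /\ forall i, deg (f u) i = 1.
  by move=> u; rewrite /f; case: constructive_indefinite_description.
have fsrc : forall u, src (f u) = u by move=> u; case: (fP u).
have fdeg : forall u i, deg (f u) i = 1 by move=> u; case: (fP u).
pose V j := iter j (nxt f) v.
pose t := map V (iota 0 (size s).+1).
have nu : ~~ uniq t.
  apply/negP => U.
  have := uniq_leq_size U (fun x _ => Hs x).
  by rewrite size_map size_iota ltnn.
case/(uniqPn v): nu => j [l [jl lt e]].
rewrite size_map size_iota in lt.
rewrite !(nth_map 0) ?size_iota ?(ltn_trans jl) // !nth_iota ?(ltn_trans jl) //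
  !add0n in e.
exists (V j), (seg f (V j) (l - j)).
have [S1 S2 S3] := seg_prop fsrc fdeg (V j) (l - j).
split => //.
- by rewrite S2 /V -iterD subnK ?(ltnW jl).
- by move=> i; rewrite S3 subn_gt0.
- have [T1 T2 T3] := seg_prop fsrc fdeg v j.
  by exists (seg f v j).
Qed.
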